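(* $\mathsf{LPO}'\equiv_{sW}\mathsf{NEG}$, where $\mathsf{NEG}:\mathcal A_-(2^\mathbb N)\to\{0,1\}$ is given by $\mathsf{NEG}(A)=1$ if $\mu(A)=0$ and $\mathsf{NEG}(A)=0$ otherwise ($\mu$ the uniform measure on $2^\mathbb N$).
   Context: A problem $f:\subseteq X\rightrightarrows Y$ between represented spaces is a partial multi-valued map; $F\vdash f$ means $\delta_YF(p)\in f(\delta_X(p))$ whenever $\delta_X(p)\in\mathrm{dom}(f)$; $f\le_{sW}g$ iff there are computable $H,K$ with $HGK\vdash f$ for all $G\vdash g$, $\equiv_{sW}$ the induced equivalence. $\{0,1\}$ is represented by $p\mapsto p(0)$. $\mathsf{LPO}:\mathbb N^\mathbb N\to\{0,1\}$, $\mathsf{LPO}(p)=0\iff\exists n\;p(n)=0$. $\lim:\subseteq\mathbb{N}^\mathbb{N}\to\mathbb{N}^\mathbb{N}$ maps $\langle p_0,p_1,\dots\rangle$ to $\lim_np_n$; the jump $\mathsf{LPO}'$ is $\mathsf{LPO}$ with input representation $\lim$ (i.e. input $p$ is given via a sequence converging to it). $\mathcal A_-(2^\mathbb N)$ is the space of closed subsets of Cantor space represented by $p\mapsto2^\mathbb N\setminus\bigcup_nB_{p(n)}$ for a standard enumeration $(B_n)$ of basic open balls. *)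

(* Defs.v *)
From Stdlib Require Import Reals List Arith PArith.
Import ListNotations.
Set Implicit Arguments.

Definition npair (x y : nat) : nat := (x + y) * (x + y + 1) / 2 + y.

Inductive code : Type :=
| czero : code
| csucc : code
| cfst  : code
| csnd  : code
| cpr   : code -> code -> code
| ccomp : code -> code -> code
| crec  : code -> code -> code
| cmin  : code -> code.

Inductive eval : code -> nat -> nat -> Prop :=
| ev_zero x : eval czero x 0
| ev_succ x : eval csucc x (S x)
| ev_fst x y : eval cfst (npair x y) x
| ev_snd x y : eval csnd (npair x y) y
| ev_pr f g x a b : eval f x a -> eval g x b -> eval (cpr f g) x (npair a b)
| ev_comp f g x a b : eval g x a -> eval f a b -> eval (ccomp f g) x b
| ev_rec0 f g x a : eval f x a -> eval (crec f g) (npair x 0) a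
| ev_recS f g x n a b :
    eval (crec f g) (npair x n) a ->
    eval g (npair (npair x n) a) b ->
    eval (crec f g) (npair x (S n)) b
| ev_min f x n :
    eval f (npair x n) 0 ->
    (forall m, m < n -> exists v, eval f (npair x m) (S v)) ->
    eval (cmin f) x n.

Fixpoint enc_list (l : list nat) : nat :=
  match l with [] => 0 | a :: l' => S (npair a (enc_list l')) end.

Definition prefix (p : nat -> nat) (k : nat) : list nat := map p (seq 0 k).

(* machine e computes output q on input p: for each n, reading some finite
   prefix of p it eventually answers q n (encoded as S (q n)); answer 0 means
   "not yet", and any non-zero answer is correct. *)
Definition computes (e : code) (p q : nat -> nat) : Prop :=
  forall n,
    (exists k, eval e (npair (enc_list (prefix p k)) n) (S (q n))) /\
    (forall k v, eval e (npair (enc_list (prefix p k)) n) (S v) -> v = q n).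

Record rspace : Type := RSpace {
  carrier :> Type;
  rep : (nat -> nat) -> carrier -> Prop
}.

Definition problem (X Y : rspace) := X -> Y -> Prop.

Definition sW_le (X Y X' Y' : rspace) (f : problem X Y) (g : problem X' Y') : Prop :=
  exists eH eK : code,
    forall G : (nat -> nat) -> (nat -> nat),
      (forall p' x', rep X' p' x' -> (exists y', g x' y') ->
         exists y', rep Y' (G p') y' /\ g x' y') ->
      forall p x, rep X p x -> (exists y, f x y) ->
        exists q r y, computes eK p q /\ computes eH (G q) r /\
                      rep Y r y /\ f x y.

Definition sW_equiv (X Y X' Y' : rspace) (f : problem X Y) (g : problem X' Y') : Prop :=
  sW_le f g /\ sW_le g f.

Definition Two : rspace :=
  @RSpace bool (fun p b => p 0 = (if b then 1 else 0)).

(* Baire space with input representation lim: p = <p_0,p_1,...>,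
   <p_0,p_1,...>(<i,j>) = p_i(j), converging to x *)
Definition Baire_lim : rspace :=
  @RSpace (nat -> nat)
    (fun p x => forall j, exists N, forall i, N <= i -> p (npair i j) = x j).

(* LPO(p) = 0 iff exists n, p(n) = 0 ; LPO' = LPO on Baire_lim *)
Definition LPO' : problem Baire_lim Two :=
  fun x b => b = false <-> exists n, x n = 0.

(* Cantor space points: nat -> bool. Standard enumeration of basic balls:
   ball n = cylinder of the word obtained from the binary expansion of n+1
   with the leading 1 removed. *)
Fixpoint word_of_pos (q : positive) : list bool :=
  match q with
  | xH => []
  | xO q' => word_of_pos q' ++ [false]
  | xI q' => word_of_pos q' ++ [true]
  end.

Definition word (n : nat) : list bool := word_of_pos (Pos.of_succ_nat n).

Definition in_cyl (w : list bool) (x : nat -> bool) : Prop :=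
  forall i, i < length w -> x i = nth i w false.

Definition in_ball (n : nat) (x : nat -> bool) : Prop := in_cyl (word n) x.

Definition ClosedCantor : rspace :=
  @RSpace ((nat -> bool) -> Prop)
    (fun p A => forall x, A x <-> ~ (exists n, in_ball (p n) x)).

(* mu(A) = 0 for the uniform measure: A is covered by cylinders of
   arbitrarily small total measure *)
Definition null_set (A : (nat -> bool) -> Prop) : Prop :=
  forall k : nat, exists s : nat -> list bool,
    (forall x, A x -> exists i, in_cyl (s i) x) /\
    (forall N, (sum_f_R0 (fun i => (/2)^(length (s i))) N <= (/2)^k)%R).

Definition NEG : problem ClosedCantor Two :=
  fun A b => b = true <-> null_set A.

(* Main.v *)
Require Import Defs.
From Stdlib Require Import Reals List Arith PArith Lia Lra Classical ClassicalEpsilon.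
Import ListNotations.
Open Scope nat_scope.
Open Scope bool_scope.

Definition Tn (s : nat) := s * (s + 1) / 2.

Lemma Tn_S s : Tn (S s) = Tn s + S s.
Proof.
  unfold Tn. replace (S s * (S s + 1)) with (s * (s+1) + S s * 2) by ring.
  rewrite Nat.div_add by lia. reflexivity.
Qed.

Lemma Tn_mono a b : a <= b -> Tn a <= Tn b.
Proof. induction 1; auto. rewrite Tn_S. lia. Qed.

Lemma npair_T x y : npair x y = Tn (x + y) + y.
Proof. reflexivity. Qed.

Lemma npair_inj x y x' y' : npair x y = npair x' y' -> x = x' /\ y = y'.
Proof.
  rewrite !npair_T. intros H.
  assert (x + y = x' + y').
  { destruct (Nat.lt_trichotomy (x+y) (x'+y')) as [h|[h|h]]; auto.
    - pose proof (Tn_mono (S (x+y)) (x'+y') h). rewrite Tn_S in H0. lia.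
    - pose proof (Tn_mono (S (x'+y')) (x+y) h). rewrite Tn_S in H0. lia. }
  rewrite H0 in H. lia.
Qed.

Fixpoint unpair (m : nat) : nat * nat :=
  match m with
  | 0 => (0, 0)
  | S m' => let (x, y) := unpair m' in
            match x with 0 => (S y, 0) | S x' => (x', S y) end
  end.

Lemma npair_unpair m : npair (fst (unpair m)) (snd (unpair m)) = m.
Proof.
  induction m; [reflexivity|].
  simpl. destruct (unpair m) as [x y]. simpl in *.
  destruct x; simpl; rewrite !npair_T in *.
  - replace (S y + 0) with (S y) by lia. rewrite Tn_S. simpl in IHm. lia.
  - replace (x + S y) with (S x + y) by lia. lia.
Qed.

Lemma unpair_npair a b : unpair (npair a b) = (a, b).
Proof.
  pose proof (npair_unpair (npair a b)) as H.
  apply npair_inj in H. destruct (unpair (npair a b)); simpl in *; f_equal; tauto.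
Qed.

Lemma eval_det c : forall x a b, eval c x a -> eval c x b -> a = b.
Proof.
  induction c; intros x a b Ha Hb.
  - inversion Ha; inversion Hb; subst; auto.
  - inversion Ha; inversion Hb; subst; auto.
  - inversion Ha; subst. inversion Hb; subst. match goal with H : npair _ _ = npair _ _ |- _ => apply npair_inj in H; destruct H; subst; auto end.
  - inversion Ha; subst. inversion Hb; subst. match goal with H : npair _ _ = npair _ _ |- _ => apply npair_inj in H; destruct H; subst; auto end.
  - inversion Ha; subst. inversion Hb; subst. f_equal; eauto.
  - inversion Ha; subst. inversion Hb; subst.
    assert (a0 = a1) by eauto. subst; eauto.
  - assert (HR : forall n x a b, eval (crec c1 c2) (npair x n) a ->
                 eval (crec c1 c2) (npair x n) b -> a = b).
    { induction n; intros x' a' b' H1 H2.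
      - inversion H1; subst; match goal with H : npair _ _ = npair _ _ |- _ => apply npair_inj in H; destruct H; subst end; try lia.
        inversion H2; subst; match goal with H : npair _ _ = npair _ _ |- _ => apply npair_inj in H; destruct H; subst end; try lia. eauto.
      - inversion H1; subst; match goal with H : npair _ _ = npair _ _ |- _ => apply npair_inj in H; destruct H; subst end; try lia.
        inversion H2; subst; match goal with H : npair _ _ = npair _ _ |- _ => apply npair_inj in H; destruct H; subst end; try lia.
        injection H0; injection H3; intros; subst.
        assert (a0 = a1) by eauto. subst. eauto. }
    inversion Ha; subst; eauto.
  - inversion Ha; subst. inversion Hb; subst.
    destruct (Nat.lt_trichotomy a b) as [h|[h|h]]; auto.
    + destruct (H3 a h) as [v Hv]. specialize (IHc _ _ _ H0 Hv). discriminate.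
    + destruct (H1 b h) as [v Hv]. specialize (IHc _ _ _ H2 Hv). discriminate.
Qed.

Inductive exp : Type :=
| EVar (k : nat) | EZero | ESucc (e : exp) | EFst (e : exp) | ESnd (e : exp)
| EPair (a b : exp) | ERec (b s n : exp).

Fixpoint den (e : exp) (env : list nat) : nat :=
  match e with
  | EVar k => nth k env 0
  | EZero => 0
  | ESucc e => S (den e env)
  | EFst e => fst (unpair (den e env))
  | ESnd e => snd (unpair (den e env))
  | EPair a b => npair (den a env) (den b env)
  | ERec b s n => nat_rect (fun _ => nat) (den b env)
                    (fun m acc => den s (acc :: m :: env)) (den n env)
  end.

Fixpoint shd (c d : nat) (e : exp) : exp :=
  match e with
  | EVar k => if k <? c then EVar k else EVar (k + d)
  | EZero => EZero
  | ESucc e => ESucc (shd c d e)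
  | EFst e => EFst (shd c d e)
  | ESnd e => ESnd (shd c d e)
  | EPair a b => EPair (shd c d a) (shd c d b)
  | ERec b s n => ERec (shd c d b) (shd (S (S c)) d s) (shd c d n)
  end.

Lemma den_shd e : forall c d env1 ins env2, length env1 = c -> length ins = d ->
  den (shd c d e) (env1 ++ ins ++ env2) = den e (env1 ++ env2).
Proof.
  induction e; intros c d env1 ins env2 Hc Hd; simpl; try (f_equal; eauto; fail).
  - destruct (Nat.ltb_spec k c); simpl.
    + rewrite !app_nth1 by lia. auto.
    + rewrite !app_nth2 by lia. f_equal. lia.
  - rewrite IHe1, IHe3 by auto.
    induction (den e3 (env1 ++ env2)); simpl; auto.
    rewrite IHn. subst c.
    apply (IHe2 _ _ (_ :: _ :: env1)); auto.
Qed.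

Lemma den_shd0 e x env : den (shd 0 1 e) (x :: env) = den e env.
Proof. apply (den_shd e 0 1 [] [x] env); auto. Qed.

Lemma den_shd02 e x y env : den (shd 0 2 e) (x :: y :: env) = den e env.
Proof. apply (den_shd e 0 2 [] [x;y] env); auto. Qed.

Fixpoint encenv (l : list nat) : nat :=
  match l with [] => 0 | v :: l' => npair v (encenv l') end.

Fixpoint varc (k : nat) : code :=
  match k with 0 => cfst | S k' => ccomp (varc k') csnd end.

Definition Pc := crec czero (ccomp csnd cfst).
Definition IDc := ccomp Pc (cpr czero csucc).

Fixpoint compile (e : exp) : code :=
  match e with
  | EVar k => varc k
  | EZero => czero
  | ESucc e => ccomp csucc (compile e)
  | EFst e => ccomp cfst (compile e)
  | ESnd e => ccomp csnd (compile e)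
  | EPair a b => cpr (compile a) (compile b)
  | ERec b s n => ccomp (crec (compile b)
        (ccomp (compile s) (cpr csnd (cpr (ccomp csnd cfst) (ccomp cfst cfst)))))
        (cpr IDc (compile n))
  end.

Lemma ev_fst_any v : eval cfst v (fst (unpair v)).
Proof.
  pose proof (ev_fst (fst (unpair v)) (snd (unpair v))) as H.
  rewrite npair_unpair in H. exact H.
Qed.
Lemma ev_snd_any v : eval csnd v (snd (unpair v)).
Proof.
  pose proof (ev_snd (fst (unpair v)) (snd (unpair v))) as H.
  rewrite npair_unpair in H. exact H.
Qed.

Lemma ev_P y n : eval Pc (npair y n) (pred n).
Proof.
  induction n.
  - apply ev_rec0. constructor.
  - eapply ev_recS. apply IHn. eapply ev_comp. apply ev_fst. apply ev_snd.
Qed.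

Lemma ev_ID x : eval IDc x x.
Proof.
  eapply ev_comp. apply ev_pr; constructor. apply (ev_P 0 (S x)).
Qed.

Lemma ev_varc k : forall env, eval (varc k) (encenv env) (nth k env 0).
Proof.
  induction k; intros [|v env]; simpl.
  - apply (ev_fst_any 0).
  - apply ev_fst.
  - eapply ev_comp. apply (ev_snd_any 0). simpl.
    assert (H := IHk []). replace (nth k [] 0) with 0 in H by (destruct k; reflexivity). exact H.
  - eapply ev_comp. apply ev_snd. apply IHk.
Qed.

Theorem compile_ok e : forall env, eval (compile e) (encenv env) (den e env).
Proof.
  induction e; intros env; simpl.
  - apply ev_varc.
  - constructor.
  - eapply ev_comp; eauto. constructor.
  - eapply ev_comp; eauto. apply ev_fst_any.
  - eapply ev_comp; eauto. apply ev_snd_any.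
  - constructor; auto.
  - eapply ev_comp. apply ev_pr. apply ev_ID. apply IHe3.
    induction (den e3 env); simpl.
    + apply ev_rec0. apply IHe1.
    + eapply ev_recS. apply IHn.
      eapply ev_comp.
      * apply ev_pr. constructor. apply ev_pr.
        eapply ev_comp; constructor. eapply ev_comp; constructor.
      * apply (IHe2 (_ :: _ :: env)).
Qed.

Definition top (e : exp) : code := ccomp (compile e) (cpr cfst (cpr csnd czero)).

Lemma top_ok e L m : eval (top e) (npair L m) (den e [L; m]).
Proof.
  eapply ev_comp. apply ev_pr. constructor. apply ev_pr; constructor.
  apply (compile_ok e [L; m]).
Qed.

Lemma top_computes e p q :
  (forall n, exists k, den e [enc_list (prefix p k); n] = S (q n)) ->
  (forall k n v, den e [enc_list (prefix p k); n] = S v -> v = q n) ->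
  computes (top e) p q.
Proof.
  intros H1 H2 n. split.
  - destruct (H1 n) as [k Hk]. exists k. rewrite <- Hk. apply top_ok.
  - intros k v Hv. pose proof (top_ok e (enc_list (prefix p k)) n) as H.
    apply (H2 k n v). symmetry. eapply eval_det; eauto.
Qed.

Definition PRED e := ERec EZero (EVar 1) e.
Definition ADD a b := ERec a (ESucc (EVar 0)) b.
Definition SUB a b := ERec a (PRED (EVar 0)) b.
Definition MUL a b := ERec EZero (ADD (EVar 0) (shd 0 2 a)) b.
Definition POW2 e := ERec (ESucc EZero) (ADD (EVar 0) (EVar 0)) e.
Fixpoint CONST n := match n with 0 => EZero | S n => ESucc (CONST n) end.
Definition LE a b := SUB (CONST 1) (SUB a b).
Definition LT a b := LE (ESucc a) b.
Definition NOTZ a := SUB (CONST 1) (SUB (CONST 1) a).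
Definition SUM body n := ERec EZero (ADD (EVar 0) (shd 0 1 body)) n.
Definition CASE T body := ERec EZero (shd 0 1 body) T.
Definition TAIL e := ESnd (PRED e).
Definition TAILN L n := ERec L (TAIL (EVar 0)) n.
Definition HEAD e := EFst (PRED e).

Fixpoint sumto (f : nat -> nat) (n : nat) : nat :=
  match n with 0 => 0 | S n' => sumto f n' + f n' end.

Lemma sumto_ext f g n : (forall j, j < n -> f j = g j) -> sumto f n = sumto g n.
Proof. induction n; simpl; intros; auto. rewrite IHn, H; auto. Qed.

Definition tl' c := snd (unpair (pred c)).
Definition hd' c := fst (unpair (pred c)).
Definition tailn L n := Nat.iter n tl' L.

Lemma den_PRED e env : den (PRED e) env = pred (den e env).
Proof. unfold PRED; simpl. destruct (den e env); reflexivity. Qed.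
Global Opaque PRED.

Lemma den_ADD a b env : den (ADD a b) env = den a env + den b env.
Proof. unfold ADD; simpl. induction (den b env); simpl; lia. Qed.
Global Opaque ADD.

Lemma den_SUB a b env : den (SUB a b) env = den a env - den b env.
Proof. unfold SUB; simpl. induction (den b env); simpl. lia.
  rewrite den_PRED. simpl. rewrite IHn. lia. Qed.
Global Opaque SUB.

Lemma den_MUL a b env : den (MUL a b) env = den a env * den b env.
Proof. unfold MUL; simpl. induction (den b env); simpl. lia.
  rewrite den_ADD. simpl. rewrite den_shd02, IHn. lia. Qed.
Global Opaque MUL.

Lemma den_POW2 e env : den (POW2 e) env = 2 ^ den e env.
Proof. unfold POW2; simpl. induction (den e env); simpl. auto.
  rewrite den_ADD. simpl. rewrite IHn. lia. Qed.
Global Opaque POW2.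

Lemma den_CONST n env : den (CONST n) env = n.
Proof. induction n; simpl; auto. Qed.
Global Opaque CONST.

Lemma den_LE a b env : den (LE a b) env = 1 - (den a env - den b env).
Proof. unfold LE. rewrite !den_SUB, den_CONST. auto. Qed.
Global Opaque LE.

Lemma den_LT a b env : den (LT a b) env = 1 - (S (den a env) - den b env).
Proof. unfold LT. rewrite den_LE. auto. Qed.
Global Opaque LT.

Lemma den_NOTZ a env : den (NOTZ a) env = 1 - (1 - den a env).
Proof. unfold NOTZ. rewrite !den_SUB, den_CONST. auto. Qed.
Global Opaque NOTZ.

Lemma den_SUM body n env :
  den (SUM body n) env = sumto (fun j => den body (j :: env)) (den n env).
Proof. unfold SUM; simpl. induction (den n env); simpl. auto.
  rewrite den_ADD. simpl. rewrite den_shd0, IHn0. auto. Qed.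
Global Opaque SUM.

Lemma den_CASE T body env :
  den (CASE T body) env = match den T env with 0 => 0 | S v => den body (v :: env) end.
Proof. unfold CASE; simpl. destruct (den T env); simpl; auto.
  rewrite den_shd0. auto. Qed.
Global Opaque CASE.

Lemma den_TAILN L n env : den (TAILN L n) env = tailn (den L env) (den n env).
Proof. unfold TAILN; simpl. induction (den n env); simpl. auto.
  unfold TAIL. simpl. rewrite den_PRED. simpl. rewrite IHn0. reflexivity. Qed.
Global Opaque TAILN.

Lemma den_HEAD e env : den (HEAD e) env = hd' (den e env).
Proof. unfold HEAD; simpl. rewrite den_PRED. reflexivity. Qed.
Global Opaque HEAD.

Lemma tailn_enc p a len n :
  tailn (enc_list (map p (seq a len))) n = enc_list (map p (seq (a + n) (len - n))).
Proof.
  induction n; simpl.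
  - rewrite Nat.add_0_r, Nat.sub_0_r. auto.
  - unfold tailn in *. simpl. rewrite IHn.
    destruct (len - n) eqn:E.
    + replace (len - S n) with 0 by lia. reflexivity.
    + simpl. unfold tl'. simpl. rewrite unpair_npair. simpl.
      replace (len - S n) with n0 by lia. f_equal. f_equal. f_equal. lia.
Qed.

Lemma tailn_prefix_lt p k n : n < k ->
  exists R, tailn (enc_list (prefix p k)) n = S (npair (p n) R).
Proof.
  intros H. unfold prefix. rewrite tailn_enc. simpl.
  replace (k - n) with (S (k - S n)) by lia. simpl. eauto.
Qed.

Lemma tailn_prefix_ge p k n : k <= n -> tailn (enc_list (prefix p k)) n = 0.
Proof.
  intros H. unfold prefix. rewrite tailn_enc. replace (k - n) with 0 by lia. reflexivity.
Qed.

Lemma hd_prefix p k n : n < k -> hd' (tailn (enc_list (prefix p k)) n) = p n.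
Proof.
  intros H. destruct (tailn_prefix_lt p k n H) as [R HR]. rewrite HR.
  unfold hd'. simpl. rewrite unpair_npair. reflexivity.
Qed.

Definition KH := CASE (EVar 0) (ESucc (EFst (EVar 0))).

Lemma KH_computes P : computes (top KH) P (fun _ => P 0).
Proof.
  apply top_computes.
  - intros n. exists 1. unfold KH. rewrite den_CASE. simpl.
    rewrite unpair_npair. reflexivity.
  - intros k n v. unfold KH. rewrite den_CASE. simpl.
    destruct k; simpl. discriminate.
    rewrite unpair_npair. simpl. congruence.
Qed.

Definition KA :=
  CASE (TAILN (EVar 0) (EPair (ESnd (EVar 1)) (EFst (EFst (EVar 1)))))
   (ESucc (ADD (CONST 1)
      (MUL (MUL (LE (ESnd (EFst (EVar 2))) (ESnd (EVar 2))) (NOTZ (EFst (EVar 0))))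
           (PRED (MUL (CONST 3) (POW2 (ESucc (EFst (EVar 2))))))))).

Definition qA (p : nat -> nat) (m : nat) : nat :=
  let c := fst (unpair m) in let i := snd (unpair m) in
  let n := fst (unpair c) in let N := snd (unpair c) in
  if (N <=? i) && negb (p (npair i n) =? 0) then 3 * 2 ^ (S c) else 1.

Lemma KA_den L m : den KA [L; m] =
  match tailn L (npair (snd (unpair m)) (fst (unpair (fst (unpair m))))) with
  | 0 => 0
  | S v => S (1 + ((1 - (snd (unpair (fst (unpair m))) - snd (unpair m))) *
                   (1 - (1 - fst (unpair v)))) * pred (3 * 2 ^ (S (fst (unpair m)))))
  end.
Proof.
  unfold KA. rewrite den_CASE, den_TAILN. simpl.
  destruct (tailn L _); auto.
  simpl. rewrite den_ADD, den_CONST, !den_MUL, den_LE, den_NOTZ, den_PRED,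
    den_MUL, den_CONST, den_POW2. reflexivity.
Qed.

Lemma arithA N i x c : 1 + (1 - (N - i)) * (1 - (1 - x)) * pred (3 * 2 ^ (S c)) =
  if (N <=? i) && negb (x =? 0) then 3 * 2 ^ (S c) else 1.
Proof.
  pose proof (Nat.pow_nonzero 2 (S c) ltac:(lia)).
  remember (2 ^ S c) as P.
  destruct (Nat.leb_spec N i); destruct (Nat.eqb_spec x 0); cbn [andb negb].
  - subst. replace (N - i) with 0 by lia. lia.
  - replace (N - i) with 0 by lia. replace (1 - (1 - x)) with 1 by lia. lia.
  - replace (1 - (N - i)) with 0 by lia. lia.
  - replace (1 - (N - i)) with 0 by lia. lia.
Qed.

Lemma KA_computes p : computes (top KA) p (qA p).
Proof.
  apply top_computes.
  - intros m. exists (S (npair (snd (unpair m)) (fst (unpair (fst (unpair m)))))).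
    rewrite KA_den. destruct (tailn_prefix_lt p (S (npair (snd (unpair m)) (fst (unpair (fst (unpair m))))))
       (npair (snd (unpair m)) (fst (unpair (fst (unpair m))))) ltac:(lia)) as [R HR].
    rewrite HR. rewrite unpair_npair. simpl fst. unfold qA. f_equal. apply arithA.
  - intros k m v. rewrite KA_den.
    set (idx := npair (snd (unpair m)) (fst (unpair (fst (unpair m))))).
    destruct (Nat.ltb_spec idx k).
    + destruct (tailn_prefix_lt p k idx H) as [R HR]. rewrite HR.
      rewrite unpair_npair. simpl fst. intros Hv. injection Hv as Hv. subst v.
      unfold qA. subst idx. apply arithA.
    + rewrite tailn_prefix_ge by lia. discriminate.
Qed.

Definition MATCHe :=
  MUL (LE (MUL (ESucc (HEAD (TAILN (EVar 4) (EVar 1)))) (POW2 (EVar 0)))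
          (ADD (POW2 (EFst (EVar 5))) (EVar 2)))
      (LT (ADD (POW2 (EFst (EVar 5))) (EVar 2))
          (MUL (ESucc (ESucc (HEAD (TAILN (EVar 4) (EVar 1))))) (POW2 (EVar 0)))).
Definition UNCe := SUB (CONST 1) (SUM (SUM MATCHe (ESucc (EFst (EVar 4)))) (EFst (EVar 3))).
Definition CNTe := SUM UNCe (POW2 (EFst (EVar 2))).
Definition KB := CASE (TAILN (EVar 0) (EFst (EVar 1)))
  (ESucc (LT (MUL CNTe (POW2 (ESnd (EVar 2)))) (POW2 (EFst (EVar 2))))).

Definition le01 a b := 1 - (a - b).
Definition mtchf (pv : nat -> nat) i j n t :=
  le01 (S (pv n) * 2 ^ t) (2 ^ i + j) * le01 (S (2 ^ i + j)) (S (S (pv n)) * 2 ^ t).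
Definition termf pv i j := 1 - sumto (fun n => sumto (fun t => mtchf pv i j n t) (S i)) i.
Definition cntf pv i := sumto (termf pv i) (2 ^ i).
Definition qB p m :=
  le01 (S (cntf p (fst (unpair m)) * 2 ^ (snd (unpair m)))) (2 ^ (fst (unpair m))).

Lemma KB_den L m : den KB [L; m] =
  match tailn L (fst (unpair m)) with
  | 0 => 0
  | S _ => S (le01 (S (cntf (fun n => hd' (tailn L n)) (fst (unpair m)) * 2 ^ (snd (unpair m))))
                   (2 ^ (fst (unpair m))))
  end.
Proof.
  unfold KB. rewrite den_CASE, den_TAILN. cbn [den nth].
  destruct (tailn L _); auto. cbn [den nth].
  rewrite den_LT, den_MUL, !den_POW2. cbn [den nth]. unfold le01. do 3 f_equal. f_equal. f_equal.
  unfold CNTe. rewrite den_SUM, den_POW2. cbn [den nth]. unfold cntf.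
  apply sumto_ext. intros j _. unfold UNCe. rewrite den_SUB, den_CONST, den_SUM. cbn [den nth].
  unfold termf. f_equal. apply sumto_ext. intros n' _. rewrite den_SUM. cbn [den nth].
  apply sumto_ext. intros t _. unfold MATCHe.
  rewrite den_MUL, den_LE, den_LT, !den_MUL, !den_ADD, !den_POW2. cbn [den nth].
  rewrite !den_HEAD, !den_TAILN. cbn [den nth]. reflexivity.
Qed.

Lemma cntf_ext pv pv' i : (forall n, n < i -> pv n = pv' n) -> cntf pv i = cntf pv' i.
Proof.
  intros H. unfold cntf. apply sumto_ext. intros j _. unfold termf. f_equal.
  apply sumto_ext. intros n Hn. apply sumto_ext. intros t _. unfold mtchf. rewrite H; auto.
Qed.

Lemma KB_computes p : computes (top KB) p (qB p).
Proof.
  apply top_computes.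
  - intros m. exists (S (fst (unpair m))). rewrite KB_den.
    destruct (tailn_prefix_lt p (S (fst (unpair m))) (fst (unpair m)) ltac:(lia)) as [R HR].
    rewrite HR. unfold qB. do 4 f_equal. apply cntf_ext. intros n Hn. apply hd_prefix. lia.
  - intros k m v. rewrite KB_den.
    destruct (Nat.ltb_spec (fst (unpair m)) k).
    + destruct (tailn_prefix_lt p k _ H) as [R HR]. rewrite HR.
      intros Hv. injection Hv as Hv. subst v. unfold qB.
      assert (E: cntf (fun n => hd' (tailn (enc_list (prefix p k)) n)) (fst (unpair m))
                 = cntf p (fst (unpair m))) by (apply cntf_ext; intros; apply hd_prefix; lia).
      rewrite E. reflexivity.
    + rewrite tailn_prefix_ge by lia. discriminate.
Qed.

Definition b2n (b : bool) : nat := if b then 1 else 0.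
Fixpoint vwa (a : nat) (w : list bool) : nat :=
  match w with [] => a | b :: w' => vwa (2 * a + b2n b) w' end.
Definition vw w := vwa 1 w.

Lemma vwa_app a u r : vwa a (u ++ r) = vwa (vwa a u) r.
Proof. revert a; induction u; simpl; auto. Qed.

Lemma vwa_lin a r : vwa a r = a * 2 ^ length r + vwa 0 r.
Proof.
  revert a; induction r as [|b r IH]; intros a; cbn [vwa length]. simpl; lia.
  rewrite (IH (2 * a + b2n b)), (IH (2 * 0 + b2n b)). rewrite Nat.pow_succ_r'. lia.
Qed.

Lemma vwa0_lt r : vwa 0 r < 2 ^ length r.
Proof.
  induction r as [|b r IH]; cbn [vwa length]. simpl; lia.
  rewrite vwa_lin, Nat.pow_succ_r'. destruct b; cbn [b2n]; lia.
Qed.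

Lemma vw_range w : 2 ^ length w <= vw w < 2 ^ S (length w).
Proof. unfold vw. rewrite vwa_lin, Nat.pow_succ_r'. pose proof (vwa0_lt w). lia. Qed.

Lemma vw_pos w : 1 <= vw w.
Proof. pose proof (vw_range w). pose proof (Nat.pow_nonzero 2 (length w)). lia. Qed.

Lemma vw_snoc w b : vw (w ++ [b]) = 2 * vw w + b2n b.
Proof. unfold vw. rewrite vwa_app. reflexivity. Qed.

Lemma vw_word_of_pos P : vw (word_of_pos P) = Pos.to_nat P.
Proof.
  induction P; simpl.
  - rewrite vw_snoc, IHP, Pos2Nat.inj_xI. simpl. lia.
  - rewrite vw_snoc, IHP, Pos2Nat.inj_xO. simpl. lia.
  - reflexivity.
Qed.

Lemma vw_word n : vw (word n) = S n.
Proof. unfold word. rewrite vw_word_of_pos. apply SuccNat2Pos.id_succ. Qed.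

Lemma len_from_range w i : 2 ^ i <= vw w < 2 ^ S i -> length w = i.
Proof.
  intros H. pose proof (vw_range w).
  assert (length w < S i). { apply (Nat.pow_lt_mono_r_iff 2); lia. }
  assert (i < S (length w)). { apply (Nat.pow_lt_mono_r_iff 2); lia. }
  lia.
Qed.

Lemma vw_inj_len n : forall u w, length u = n -> length w = n -> vw u = vw w -> u = w.
Proof.
  induction n; intros u w Hu Hw H.
  - destruct u, w; simpl in *; auto; discriminate.
  - destruct (exists_last (l:=u)) as [u' [b Hb]]. intro; subst; discriminate.
    destruct (exists_last (l:=w)) as [w' [c Hc]]. intro; subst; discriminate.
    subst. rewrite !vw_snoc in H. rewrite !length_app in *. simpl in *.
    assert (b = c) by (destruct b, c; simpl in H; auto; lia). subst.
    f_equal. apply IHn; lia.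
Qed.

Lemma vw_inj u w : vw u = vw w -> u = w.
Proof.
  intros H. apply (vw_inj_len (length u)); auto.
  apply len_from_range. rewrite <- H. apply vw_range.
Qed.

Lemma word_vw n w : vw w = S n -> word n = w.
Proof. intros H. apply vw_inj. rewrite vw_word. auto. Qed.

Lemma in_cyl_map u z : in_cyl u z <-> map z (seq 0 (length u)) = u.
Proof.
  split.
  - intros H. apply nth_ext with (d := false) (d' := false).
    + rewrite length_map, length_seq. auto.
    + intros n Hn. rewrite length_map, length_seq in Hn.
      rewrite nth_indep with (d' := z 0) by (rewrite length_map, length_seq; auto).
      rewrite map_nth, seq_nth by auto. simpl. apply H. auto.
  - intros H i Hi. rewrite <- H.
    rewrite nth_indep with (d' := z 0) by (rewrite length_map, length_seq; auto).
    rewrite map_nth, seq_nth by auto. reflexivity.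
Qed.

Definition Xz (z : nat -> bool) i := vw (map z (seq 0 i)).

Lemma Xz_range z i : 2 ^ i <= Xz z i < 2 ^ S i.
Proof. unfold Xz. pose proof (vw_range (map z (seq 0 i))). rewrite length_map, length_seq in H. auto. Qed.

Lemma Xz_split z l i : l <= i -> exists r, r < 2 ^ (i - l) /\ Xz z i = Xz z l * 2 ^ (i - l) + r.
Proof.
  intros H. exists (vwa 0 (map z (seq l (i - l)))). split.
  - pose proof (vwa0_lt (map z (seq l (i - l)))). rewrite length_map, length_seq in H0. auto.
  - unfold Xz, vw. replace i with (l + (i - l)) at 1 by lia.
    rewrite seq_app, map_app, vwa_app, vwa_lin. rewrite length_map, length_seq. reflexivity.
Qed.

Lemma div_char A E P r : 0 < P -> r < P -> (E * P <= A * P + r < S E * P <-> A = E).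
Proof. intros. split; [|intros; subst; simpl; lia]. intros [H1 H2].
  destruct (Nat.lt_trichotomy A E) as [h|[h|h]]; auto.
  - assert (S A * P <= E * P) by (apply Nat.mul_le_mono_r; lia). simpl in *. lia.
  - assert (S E * P <= A * P) by (apply Nat.mul_le_mono_r; lia). simpl in *. lia.
Qed.

Lemma cyl_ext u z i : length u <= i ->
  (in_cyl u z <-> vw u * 2 ^ (i - length u) <= Xz z i < S (vw u) * 2 ^ (i - length u)).
Proof.
  intros H. destruct (Xz_split z (length u) i H) as [r [Hr E]]. rewrite E.
  rewrite div_char by (auto; pose proof (Nat.pow_nonzero 2 (i - length u)); lia).
  rewrite in_cyl_map. unfold Xz. split; intros. rewrite H0; auto. apply vw_inj; auto.
Qed.

Definition zf (X : nat) : nat -> bool := fun t => nth t (word (X - 1)) false.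

Lemma map_nth_seq (w : list bool) : map (fun t => nth t w false) (seq 0 (length w)) = w.
Proof.
  apply nth_ext with (d := false) (d' := false).
  - rewrite length_map, length_seq; auto.
  - intros n Hn. rewrite length_map, length_seq in Hn.
    rewrite nth_indep with (d' := (fun t => nth t w false) 0) by (rewrite length_map, length_seq; auto).
    rewrite (map_nth (fun t => nth t w false) (seq 0 (length w)) 0 n).
    rewrite seq_nth by auto. reflexivity.
Qed.

Lemma Xz_zf X i : 2 ^ i <= X < 2 ^ S i -> Xz (zf X) i = X.
Proof.
  intros H. assert (E : vw (word (X - 1)) = X).
  { rewrite vw_word. pose proof (Nat.pow_nonzero 2 i). lia. }
  assert (L : length (word (X - 1)) = i) by (apply len_from_range; rewrite E; auto).
  unfold Xz, zf. rewrite <- L, map_nth_seq. auto.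
Qed.

Lemma match_t u X i t : 2 ^ i <= X < 2 ^ S i -> t <= i ->
  vw u * 2 ^ t <= X < S (vw u) * 2 ^ t -> t = i - length u /\ length u <= i.
Proof.
  intros HX Ht [H1 H2]. pose proof (vw_range u).
  assert (2 ^ (length u + t) < 2 ^ S i).
  { rewrite Nat.pow_add_r. assert (2 ^ length u * 2 ^ t <= vw u * 2 ^ t) by (apply Nat.mul_le_mono_r; lia). lia. }
  assert (2 ^ i < 2 ^ (S (length u) + t)).
  { rewrite Nat.pow_add_r. assert (S (vw u) * 2 ^ t <= 2 ^ S (length u) * 2 ^ t) by (apply Nat.mul_le_mono_r; lia). lia. }
  apply Nat.pow_lt_mono_r_iff in H0; [|lia]. apply Nat.pow_lt_mono_r_iff in H3; [|lia]. lia.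
Qed.

Lemma in_cyl_agree u z z' : (forall t, t < length u -> z t = z' t) -> in_cyl u z -> in_cyl u z'.
Proof. intros H Hz i Hi. rewrite <- H; auto. Qed.

Lemma in_cyl_snoc v b z : in_cyl (v ++ [b]) z <-> in_cyl v z /\ z (length v) = b.
Proof.
  split.
  - intros H. split.
    + intros i Hi. rewrite H by (rewrite length_app; simpl; lia). apply app_nth1; auto.
    + rewrite H by (rewrite length_app; simpl; lia). rewrite app_nth2 by lia.
      rewrite Nat.sub_diag. reflexivity.
  - intros [H1 H2] i Hi. rewrite length_app in Hi. simpl in Hi.
    destruct (Nat.lt_ge_cases i (length v)).
    + rewrite app_nth1 by auto. auto.
    + assert (i = length v) by lia. subst. rewrite app_nth2 by lia.
      rewrite Nat.sub_diag. auto.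
Qed.

Section Fan.
Variable F : nat -> list bool.

Definition bad v := forall J, exists z, in_cyl v z /\ forall l, l < J -> ~ in_cyl (F l) z.

Lemma bad_step v : bad v -> exists b, bad (v ++ [b]).
Proof.
  intros H. apply NNPP. intros C.
  assert (H0 : ~ bad (v ++ [false])) by (intro; apply C; eauto).
  assert (H1 : ~ bad (v ++ [true])) by (intro; apply C; eauto).
  unfold bad in H0, H1.
  apply not_all_ex_not in H0. destruct H0 as [J0 H0].
  apply not_all_ex_not in H1. destruct H1 as [J1 H1].
  destruct (H (J0 + J1)) as [z [Hz Hl]].
  destruct (z (length v)) eqn:E.
  - apply H1. exists z. split. apply in_cyl_snoc; auto.
    intros l Hl' Hc. apply (Hl l); auto. lia.
  - apply H0. exists z. split. apply in_cyl_snoc; auto.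
    intros l Hl' Hc. apply (Hl l); auto. lia.
Qed.

Lemma ex_step v : exists b, bad v -> bad (v ++ [b]).
Proof.
  destruct (classic (bad v)) as [H|H].
  - destruct (bad_step v H) as [b Hb]. eauto.
  - exists false. tauto.
Qed.

Definition step (v : list bool) : list bool :=
  v ++ [proj1_sig (constructive_indefinite_description _ (ex_step v))].

Lemma step_bad v : bad v -> bad (step v).
Proof. unfold step. destruct (constructive_indefinite_description _ _). simpl. auto. Qed.

Definition path w n := Nat.iter n step w.

Lemma path_len w n : length (path w n) = length w + n.
Proof. induction n. simpl. lia. change (path w (S n)) with (step (path w n)).
  unfold step. rewrite length_app, IHn. simpl. lia. Qed.

Lemma path_prefix w n m : n <= m -> exists r, path w m = path w n ++ r.
Proof.
  induction 1. exists []. rewrite app_nil_r. auto.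
  destruct IHle as [r Hr]. exists (r ++ [proj1_sig (constructive_indefinite_description _ (ex_step (path w m)))]).
  change (path w (S m)) with (step (path w m)). unfold step. rewrite Hr at 1. rewrite <- app_assoc. reflexivity.
Qed.

Lemma path_bad w n : bad w -> bad (path w n).
Proof. intros H. induction n; simpl; auto. apply step_bad. auto. Qed.

Lemma fan w : (forall z, in_cyl w z -> exists l, in_cyl (F l) z) ->
  exists J, forall z, in_cyl w z -> exists l, l < J /\ in_cyl (F l) z.
Proof.
  intros Hcov. apply NNPP. intros C.
  assert (Hb : bad w).
  { intros J. apply NNPP. intros C2. apply C. exists J. intros z Hz.
    apply NNPP. intros C3. apply C2. exists z. split; auto.
    intros l Hl Hc. apply C3. eauto. }
  set (z := fun t => nth t (path w (S t)) false).
  assert (Hz : forall n, in_cyl (path w n) z).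
  { intros n i Hi. unfold z.
    destruct (Nat.le_gt_cases (S i) n).
    - destruct (path_prefix w (S i) n H) as [r Hr]. rewrite Hr. rewrite app_nth1; auto.
      rewrite path_len. lia.
    - destruct (path_prefix w n (S i) ltac:(lia)) as [r Hr]. rewrite Hr.
      rewrite app_nth1; auto. }
  destruct (Hcov z (Hz 0)) as [l Hl].
  destruct (path_bad w (length (F l)) Hb (S l)) as [z' [Hz' Hn]].
  apply (Hn l); auto. apply (in_cyl_agree (F l) z z'); auto.
  intros t Ht. specialize (Hz (length (F l)) t). specialize (Hz' t).
  rewrite path_len in Hz, Hz'. rewrite Hz, Hz' by lia. auto.
Qed.
End Fan.

Definition ind (b : bool) : nat := if b then 1 else 0.

Lemma sumto_le f g n : (forall j, j < n -> f j <= g j) -> sumto f n <= sumto g n.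
Proof. induction n; simpl; intros; auto. specialize (IHn ltac:(auto)). specialize (H n). lia. Qed.

Lemma sumto_plus f g n : sumto (fun j => f j + g j) n = sumto f n + sumto g n.
Proof. induction n; simpl; auto. lia. Qed.

Lemma sumto_swap (f : nat -> nat -> nat) n m :
  sumto (fun i => sumto (fun j => f i j) m) n = sumto (fun j => sumto (fun i => f i j) n) m.
Proof.
  induction n; simpl.
  - induction m; simpl; lia.
  - rewrite IHn. rewrite <- sumto_plus. reflexivity.
Qed.

Lemma sumto_mul c f n : c * sumto f n = sumto (fun j => c * f j) n.
Proof. induction n; simpl; lia. Qed.

Lemma term_le_sumto f n l : l < n -> f l <= sumto f n.
Proof. induction n; simpl; intros. lia. destruct (Nat.eq_dec l n). subst; lia.
  specialize (IHn ltac:(lia)). lia. Qed.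

Lemma sumto_zero f n : sumto f n = 0 <-> forall j, j < n -> f j = 0.
Proof.
  induction n; simpl. split; intros; auto; lia.
  split.
  - intros H j Hj. destruct (Nat.eq_dec j n). subst; lia. apply IHn; lia.
  - intros H. rewrite (proj2 IHn) by auto. rewrite H; auto.
Qed.

Lemma sumto_interval a b M : a <= b ->
  sumto (fun j => ind ((a <=? j) && (j <? b))) M = Nat.min M b - Nat.min M a.
Proof.
  intros Hab. induction M; cbn [sumto]. lia.
  rewrite IHM. destruct (Nat.leb_spec a M); destruct (Nat.ltb_spec M b); cbn [andb ind]; lia.
Qed.

Lemma count_cyl u i : length u <= i ->
  sumto (fun j => ind ((vw u * 2 ^ (i - length u) <=? 2 ^ i + j) &&
                       (2 ^ i + j <? S (vw u) * 2 ^ (i - length u)))) (2 ^ i)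
  = 2 ^ (i - length u).
Proof.
  intros H. set (d := i - length u).
  pose proof (vw_range u).
  assert (Hi : 2 ^ i = 2 ^ length u * 2 ^ d) by (rewrite <- Nat.pow_add_r; f_equal; lia).
  assert (H1 : 2 ^ i <= vw u * 2 ^ d) by (rewrite Hi; apply Nat.mul_le_mono_r; lia).
  assert (H2 : S (vw u) * 2 ^ d <= 2 * 2 ^ i).
  { rewrite Hi, Nat.mul_assoc. apply Nat.mul_le_mono_r. rewrite Nat.pow_succ_r' in H0. lia. }
  rewrite (sumto_ext _ (fun j => ind ((vw u * 2 ^ d - 2 ^ i <=? j) && (j <? S (vw u) * 2 ^ d - 2 ^ i)))).
  - rewrite sumto_interval by (simpl in *; lia). simpl in *. lia.
  - intros j _. f_equal. destruct (Nat.leb_spec (vw u * 2 ^ d) (2 ^ i + j));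
      destruct (Nat.leb_spec (vw u * 2 ^ d - 2 ^ i) j);
      destruct (Nat.ltb_spec (2 ^ i + j) (S (vw u) * 2 ^ d));
      destruct (Nat.ltb_spec j (S (vw u) * 2 ^ d - 2 ^ i)); simpl in *; lia.
Qed.

Lemma union_bound (g h : nat -> bool) (C : nat -> nat -> bool) M J :
  (forall j, j < M -> g j = true -> exists l, l < J /\ h l = true /\ C l j = true) ->
  sumto (fun j => ind (g j)) M <= sumto (fun l => ind (h l) * sumto (fun j => ind (C l j)) M) J.
Proof.
  intros H.
  transitivity (sumto (fun j => sumto (fun l => ind (h l) * ind (C l j)) J) M).
  - apply sumto_le. intros j Hj. destruct (g j) eqn:E; simpl; [|lia].
    destruct (H j Hj E) as [l [Hl [Hh HC]]].
    pose proof (term_le_sumto (fun l => ind (h l) * ind (C l j)) J l Hl). simpl in H0.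
    rewrite Hh, HC in H0. simpl in H0. lia.
  - rewrite <- sumto_swap. apply Nat.eq_le_incl. apply sumto_ext. intros l _.
    rewrite sumto_mul. reflexivity.
Qed.

Fixpoint rs (f : nat -> R) (n : nat) : R :=
  match n with 0 => 0%R | S n' => (rs f n' + f n')%R end.

Lemma sum_rs f N : sum_f_R0 f N = rs f (S N).
Proof. induction N; simpl. lra. rewrite IHN. simpl. reflexivity. Qed.

Lemma INR_sumto f n : INR (sumto f n) = rs (fun j => INR (f j)) n.
Proof. induction n; simpl; auto. rewrite plus_INR, IHn. reflexivity. Qed.

Lemma rs_le f g n : (forall j, j < n -> (f j <= g j)%R) -> (rs f n <= rs g n)%R.
Proof. induction n; simpl; intros. lra. specialize (IHn ltac:(auto)). specialize (H n ltac:(lia)). lra. Qed.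

Lemma rs_ext f g n : (forall j, j < n -> f j = g j) -> rs f n = rs g n.
Proof. induction n; simpl; intros; auto. rewrite IHn, H; auto. Qed.

Lemma rs_scal f c n : rs (fun j => (f j * c)%R) n = (rs f n * c)%R.
Proof. induction n; simpl. lra. rewrite IHn. lra. Qed.

Lemma rs_nonneg f n : (forall j, (0 <= f j)%R) -> (0 <= rs f n)%R.
Proof. intros. induction n; simpl. lra. specialize (H n). lra. Qed.

Lemma rs_mono f n m : (forall j, (0 <= f j)%R) -> n <= m -> (rs f n <= rs f m)%R.
Proof. intros H. induction 1. lra. simpl. specialize (H m). lra. Qed.

Lemma INR2 : INR 2 = 2%R.
Proof. simpl. lra. Qed.

Lemma half_pow_conv l i : l <= i -> (INR (2 ^ (i - l)) * (/ 2) ^ i)%R = ((/ 2) ^ l)%R.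
Proof.
  intros H. rewrite pow_INR, INR2. replace i with (l + (i - l)) at 2 by lia.
  rewrite pow_add. rewrite <- Rmult_assoc, (Rmult_comm (2 ^ (i - l))), Rmult_assoc.
  rewrite <- Rpow_mult_distr. replace (2 * / 2)%R with 1%R by field.
  rewrite pow1. lra.
Qed.

Lemma half_pos n : (0 < (/ 2) ^ n)%R.
Proof. apply pow_lt. lra. Qed.

Lemma geom_exact a N : sum_f_R0 (fun j => ((/ 2) ^ (S (a + j)))%R) N = ((/ 2) ^ a - (/ 2) ^ (S (a + N)))%R.
Proof.
  induction N.
  - simpl. rewrite Nat.add_0_r. lra.
  - rewrite tech5, IHN. replace (S (a + S N)) with (S (S (a + N))) by lia.
    simpl. lra.
Qed.

Lemma geom a N : (sum_f_R0 (fun j => ((/ 2) ^ (S (a + j)))%R) N <= (/ 2) ^ a)%R.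
Proof. rewrite geom_exact. pose proof (half_pos (S (a + N))). lra. Qed.

Lemma ext_bool a b c : (a <=? b) && (b <? c) = true <-> a <= b < c.
Proof. rewrite Bool.andb_true_iff, Nat.leb_le, Nat.ltb_lt. tauto. Qed.

Definition extb (u : list bool) i j :=
  (vw u * 2 ^ (i - length u) <=? 2 ^ i + j) && (2 ^ i + j <? S (vw u) * 2 ^ (i - length u)).

Lemma extb_cyl u i j : length u <= i -> j < 2 ^ i ->
  (extb u i j = true <-> in_cyl u (zf (2 ^ i + j))).
Proof.
  intros H Hj. unfold extb. rewrite ext_bool, (cyl_ext u (zf (2 ^ i + j)) i H).
  rewrite Xz_zf. tauto. rewrite Nat.pow_succ_r'. lia.
Qed.

Lemma extb_cyl' u i z : length u <= i -> in_cyl u z -> extb u i (Xz z i - 2 ^ i) = true.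
Proof.
  intros H Hz. unfold extb. rewrite ext_bool. pose proof (Xz_range z i).
  replace (2 ^ i + (Xz z i - 2 ^ i)) with (Xz z i) by lia.
  apply (cyl_ext u z i H). auto.
Qed.

Lemma count_extb u i : length u <= i ->
  sumto (fun j => ind (extb u i j)) (2 ^ i) = 2 ^ (i - length u).
Proof. intros; unfold extb; apply count_cyl; auto. Qed.

Lemma count_level w s J i : length w <= i -> (forall l, l < J -> length (s l) <= i) ->
  (forall z, in_cyl w z -> exists l, l < J /\ in_cyl (s l) z) ->
  2 ^ (i - length w) <= sumto (fun l => 2 ^ (i - length (s l))) J.
Proof.
  intros Hw Hs Hcov.
  pose proof (union_bound (fun j => extb w i j) (fun _ => true) (fun l j => extb (s l) i j) (2 ^ i) J).
  cbv beta in H. rewrite (count_extb w i Hw) in H.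
  rewrite (sumto_ext _ (fun l => 2 ^ (i - length (s l)))) in H.
  - apply H. intros j Hj Hg. apply extb_cyl in Hg; auto.
    destruct (Hcov _ Hg) as [l [Hl Hc]]. exists l. repeat split; auto.
    apply extb_cyl; auto.
  - intros l Hl. simpl. rewrite Nat.add_0_r. apply count_extb; auto.
Qed.

Lemma measure_lemma w s J : (forall z, in_cyl w z -> exists l, l < J /\ in_cyl (s l) z) ->
  ((/ 2) ^ length w <= rs (fun l => ((/ 2) ^ length (s l))%R) J)%R.
Proof.
  intros Hcov. set (i := length w + sumto (fun l => length (s l)) J).
  assert (Hs : forall l, l < J -> length (s l) <= i).
  { intros l Hl. pose proof (term_le_sumto (fun l => length (s l)) J l Hl). unfold i. lia. }
  pose proof (count_level w s J i ltac:(unfold i; lia) Hs Hcov) as H.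
  apply le_INR in H. rewrite INR_sumto in H.
  apply (Rmult_le_compat_r ((/ 2) ^ i)) in H; [|left; apply half_pos].
  rewrite half_pow_conv in H by (unfold i; lia).
  rewrite <- rs_scal in H. eapply Rle_trans. apply H. right. apply rs_ext.
  intros l Hl. apply half_pow_conv; auto.
Qed.

Definition wc c := true :: repeat false c ++ [true].

Lemma vwa0_repeat c : vwa 0 (repeat false c) = 0.
Proof. induction c; simpl; auto. Qed.

Lemma vw_wc c : vw (wc c) = S (3 * 2 ^ S c).
Proof.
  unfold wc, vw. cbn [vwa]. rewrite vwa_app. rewrite (vwa_lin _ (repeat false c)), vwa0_repeat, repeat_length.
  cbn [vwa b2n]. rewrite Nat.pow_succ_r'. lia.
Qed.

Lemma word_wc c : word (3 * 2 ^ S c) = wc c.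
Proof. apply word_vw. apply vw_wc. Qed.

Lemma word_1 : word 1 = [false].
Proof. apply word_vw. reflexivity. Qed.

Lemma in_ball_1 z : in_ball 1 z <-> z 0 = false.
Proof.
  unfold in_ball. rewrite word_1. split.
  - intros H. apply (H 0). simpl; lia.
  - intros H i Hi. simpl in Hi. assert (i = 0) by lia. subst. auto.
Qed.

Lemma in_cyl_wc c z : in_cyl (wc c) z <->
  z 0 = true /\ (forall t, 1 <= t <= c -> z t = false) /\ z (S c) = true.
Proof.
  unfold wc. split.
  - intros H. split; [|split].
    + apply (H 0). simpl; lia.
    + intros t Ht. rewrite H by (simpl; rewrite length_app, repeat_length; simpl; lia).
      destruct t. lia. simpl. rewrite app_nth1 by (rewrite repeat_length; lia).
      apply nth_repeat_lt. lia.
    + rewrite H by (simpl; rewrite length_app, repeat_length; simpl; lia).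
      simpl. rewrite app_nth2 by (rewrite repeat_length; lia).
      rewrite repeat_length, Nat.sub_diag. reflexivity.
  - intros [H0 [H1 H2]] i Hi. simpl in Hi. rewrite length_app, repeat_length in Hi. simpl in Hi.
    destruct i. auto. simpl.
    destruct (Nat.lt_ge_cases i c).
    + rewrite app_nth1 by (rewrite repeat_length; lia). rewrite nth_repeat_lt by lia. apply H1; lia.
    + assert (i = c) by lia. subst. rewrite app_nth2 by (rewrite repeat_length; lia).
      rewrite repeat_length, Nat.sub_diag. auto.
Qed.

Lemma wc_unique c c' z : in_cyl (wc c) z -> in_cyl (wc c') z -> c = c'.
Proof.
  rewrite !in_cyl_wc. intros [_ [A1 A2]] [_ [B1 B2]].
  destruct (Nat.lt_trichotomy c c') as [h|[h|h]]; auto.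
  - rewrite B1 in A2 by lia. discriminate.
  - rewrite A1 in B2 by lia. discriminate.
Qed.

Lemma first_true z : z 0 = true -> forall t, (exists t', t' <= t /\ z (S t') = true) ->
  exists c, in_cyl (wc c) z.
Proof.
  intros Z0. induction t; intros [t' [Ht' Hz]].
  - exists 0. apply in_cyl_wc. split; auto. split. intros; lia. assert (t' = 0) by lia. subst; auto.
  - destruct (classic (exists t'', t'' <= t /\ z (S t'') = true)) as [E|E].
    + apply IHt; auto.
    + exists (S t). apply in_cyl_wc. split; auto. split.
      * intros u Hu. destruct (z u) eqn:Zu; auto. exfalso. apply E. exists (pred u).
        split. lia. replace (S (pred u)) with u by lia. auto.
      * destruct (Nat.eq_dec t' (S t)). subst; auto. exfalso. apply E. exists t'. split; auto. lia.
Qed.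

Definition Aq (q : nat -> nat) : (nat -> bool) -> Prop := fun z => ~ exists m, in_ball (q m) z.

Lemma qA_big p c i :
  snd (unpair c) <= i -> p (npair i (fst (unpair c))) <> 0 -> qA p (npair c i) = 3 * 2 ^ S c.
Proof.
  intros H1 H2. unfold qA. rewrite unpair_npair. cbn [fst snd].
  destruct (Nat.leb_spec (snd (unpair c)) i); [|lia].
  destruct (Nat.eqb_spec (p (npair i (fst (unpair c)))) 0); [lia|]. reflexivity.
Qed.

Lemma qA_cases p m : qA p m = 1 \/
  (qA p m = 3 * 2 ^ S (fst (unpair m)) /\ snd (unpair (fst (unpair m))) <= snd (unpair m) /\
   p (npair (snd (unpair m)) (fst (unpair (fst (unpair m))))) <> 0).
Proof.
  unfold qA. destruct (Nat.leb_spec (snd (unpair (fst (unpair m)))) (snd (unpair m)));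
  destruct (Nat.eqb_spec (p (npair (snd (unpair m)) (fst (unpair (fst (unpair m)))))) 0);
  cbn [andb negb]; auto.
Qed.

Lemma A_point p x z : rep Baire_lim p x -> ~ (exists n, x n = 0) -> Aq (qA p) z ->
  z 0 = true /\ forall t, 1 <= t -> z t = false.
Proof.
  intros Hp Hx Hz.
  assert (Z0 : z 0 = true).
  { destruct (z 0) eqn:E; auto. exfalso. apply Hz. exists (npair (npair 0 1) 0).
    unfold qA. rewrite !unpair_npair. cbn. apply in_ball_1. auto. }
  split; auto. intros t Ht. destruct (z t) eqn:E; auto. exfalso.
  destruct (first_true z Z0 (pred t)) as [c Hc]. exists (pred t). split; auto.
  replace (S (pred t)) with t by lia. auto.
  destruct (Hp (fst (unpair c))) as [N0 HN0].
  apply Hz. exists (npair c (snd (unpair c) + N0)).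
  rewrite qA_big. unfold in_ball. rewrite word_wc. auto. lia.
  rewrite HN0 by lia. intro. apply Hx. eauto.
Qed.

Lemma MA p x : rep Baire_lim p x -> (null_set (Aq (qA p)) <-> ~ exists n, x n = 0).
Proof.
  intros Hp. split.
  - intros Hnull [n Hn]. destruct (Hp n) as [N0 HN0].
    set (c := npair n N0).
    assert (Hsub : forall z, in_cyl (wc c) z -> Aq (qA p) z).
    { intros z Hz [m Hm]. destruct (qA_cases p m) as [E|[E [E1 E2]]]; rewrite E in Hm.
      - apply (proj1 (in_ball_1 z)) in Hm. apply in_cyl_wc in Hz. destruct Hz as [Hz0 _]. congruence.
      - unfold in_ball in Hm. rewrite word_wc in Hm.
        pose proof (wc_unique _ _ _ Hz Hm) as Ec. rewrite <- Ec in E1, E2.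
        unfold c in E1, E2. rewrite unpair_npair in E1, E2. cbn [fst snd] in E1, E2.
        apply E2. rewrite HN0 by lia. auto. }
    destruct (Hnull (S (S (S c)))) as [s [Hcov Hsum]].
    destruct (fan s (wc c)) as [J HJ].
    { intros z Hz. apply Hcov. apply Hsub. auto. }
    pose proof (measure_lemma (wc c) s J HJ) as HM.
    assert (L : length (wc c) = S (S c)) by (unfold wc; simpl; rewrite length_app, repeat_length; simpl; lia).
    rewrite L in HM.
    assert (Hb : (rs (fun l => ((/ 2) ^ length (s l))%R) J <= (/ 2) ^ S (S (S c)))%R).
    { destruct J. simpl rs. left. apply half_pos. rewrite <- sum_rs. apply Hsum. }
    pose proof (half_pos (S (S c))). assert (((/ 2) ^ S (S (S c)) = / 2 * (/ 2) ^ S (S c))%R) by reflexivity. lra.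
  - intros Hx k. exists (fun j => true :: repeat false (k + j)). split.
    + intros z Hz. exists 0. destruct (A_point p x z Hp Hx Hz) as [Z0 Zt].
      intros i Hi. simpl in Hi. rewrite repeat_length in Hi. destruct i. auto.
      simpl. rewrite nth_repeat_lt by lia. apply Zt. lia.
    + intros N. rewrite (sum_eq _ (fun j => ((/ 2) ^ (S (k + j)))%R)).
      apply geom. intros i _. simpl length. rewrite repeat_length. reflexivity.
Qed.

Definition covered (p : nat -> nat) i z :=
  exists n, n < i /\ in_ball (p n) z /\ length (word (p n)) <= i.

Lemma le01_spec a b : le01 a b = if a <=? b then 1 else 0.
Proof. unfold le01. destruct (Nat.leb_spec a b); lia. Qed.

Lemma mtchf_nz p i j n t : mtchf p i j n t <> 0 <->
  S (p n) * 2 ^ t <= 2 ^ i + j < S (S (p n)) * 2 ^ t.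
Proof.
  unfold mtchf. rewrite !le01_spec.
  destruct (Nat.leb_spec (S (p n) * 2 ^ t) (2 ^ i + j));
  destruct (Nat.leb_spec (S (2 ^ i + j)) (S (S (p n)) * 2 ^ t)); lia.
Qed.

Lemma mtch_iff p i z n : n < i ->
  (exists t, t < S i /\ mtchf p i (Xz z i - 2 ^ i) n t <> 0) <->
  (in_ball (p n) z /\ length (word (p n)) <= i).
Proof.
  intros Hn. pose proof (Xz_range z i) as HX.
  assert (Hv : vw (word (p n)) = S (p n)) by apply vw_word.
  split.
  - intros [t [Ht Hm]]. apply mtchf_nz in Hm.
    replace (2 ^ i + (Xz z i - 2 ^ i)) with (Xz z i) in Hm by lia.
    rewrite <- Hv in Hm.
    destruct (match_t (word (p n)) (Xz z i) i t HX ltac:(lia) Hm) as [E1 E2].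
    subst t. split; auto. apply (cyl_ext _ z i E2). auto.
  - intros [Hb Hl]. exists (i - length (word (p n))). split. lia.
    apply (cyl_ext _ z i Hl) in Hb. rewrite Hv in Hb.
    apply mtchf_nz. replace (2 ^ i + (Xz z i - 2 ^ i)) with (Xz z i) by lia. auto.
Qed.

Lemma termf_spec p i z :
  (termf p i (Xz z i - 2 ^ i) = 1 /\ ~ covered p i z) \/
  (termf p i (Xz z i - 2 ^ i) = 0 /\ covered p i z).
Proof.
  unfold termf.
  destruct (Nat.eq_dec (sumto (fun n => sumto (fun t => mtchf p i (Xz z i - 2 ^ i) n t) (S i)) i) 0) as [E|E].
  - left. rewrite E. split; auto. intros [n [Hn [Hb Hl]]].
    destruct (proj2 (mtch_iff p i z n Hn) (conj Hb Hl)) as [t [Ht Hm]].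
    rewrite sumto_zero in E. specialize (E n Hn). rewrite sumto_zero in E. apply Hm; auto.
  - right. split. lia.
    assert (exists n, n < i /\ sumto (fun t => mtchf p i (Xz z i - 2 ^ i) n t) (S i) <> 0).
    { apply NNPP. intros C. apply E. apply sumto_zero. intros n Hn.
      destruct (Nat.eq_dec (sumto (fun t => mtchf p i (Xz z i - 2 ^ i) n t) (S i)) 0); auto.
      exfalso; eauto. }
    destruct H as [n [Hn Hs]].
    assert (exists t, t < S i /\ mtchf p i (Xz z i - 2 ^ i) n t <> 0).
    { apply NNPP. intros C. apply Hs. apply sumto_zero. intros t Ht.
      destruct (Nat.eq_dec (mtchf p i (Xz z i - 2 ^ i) n t) 0); auto. exfalso; eauto. }
    apply (mtch_iff p i z n Hn) in H. exists n. tauto.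
Qed.

Lemma termf_le1 p i j : termf p i j <= 1.
Proof. unfold termf. lia. Qed.

Lemma Xz_zf' i j : j < 2 ^ i -> Xz (zf (2 ^ i + j)) i - 2 ^ i = j.
Proof. intros. rewrite Xz_zf. lia. rewrite Nat.pow_succ_r'. lia. Qed.

Lemma half_sum f g M : (forall j, j < 2 * M -> f j <= g (j / 2)) -> sumto f (2 * M) <= 2 * sumto g M.
Proof.
  induction M; intros H. simpl. lia.
  replace (2 * S M) with (S (S (2 * M))) by lia. simpl sumto.
  specialize (IHM ltac:(intros; apply H; lia)).
  pose proof (H (2 * M) ltac:(lia)). pose proof (H (S (2 * M)) ltac:(lia)).
  replace (2 * M / 2) with M in H0 by (rewrite Nat.mul_comm, Nat.div_mul; lia).
  replace (S (2 * M) / 2) with M in H1.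
  2:{ apply Nat.div_unique with 1; lia. }
  replace (M + (M + 0)) with (2 * M) by lia. lia.
Qed.

Lemma cnt_mono p i : cntf p (S i) <= 2 * cntf p i.
Proof.
  unfold cntf. rewrite Nat.pow_succ_r'. apply half_sum. intros j Hj.
  set (z := zf (2 ^ S i + j)).
  assert (E1 : Xz z (S i) - 2 ^ S i = j) by (apply Xz_zf'; rewrite Nat.pow_succ_r'; lia).
  destruct (Xz_split z i (S i) ltac:(lia)) as [r [Hr E]].
  replace (S i - i) with 1 in * by lia. simpl in Hr.
  pose proof (Xz_range z i). pose proof (Xz_range z (S i)).
  assert (E2 : Xz z i - 2 ^ i = j / 2).
  { pose proof (Nat.div_mod_eq j 2). pose proof (Nat.mod_upper_bound j 2 ltac:(lia)).
    rewrite Nat.pow_succ_r' in *. simpl in E. lia. }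
  rewrite <- E2, <- E1.
  destruct (termf_spec p (S i) z) as [[A1 A2]|[A1 A2]]; [|lia].
  destruct (termf_spec p i z) as [[B1 B2]|[B1 B2]]; [lia|].
  exfalso. apply A2. destruct B2 as [n [Hn [Hb Hl]]]. exists n. repeat split; auto; lia.
Qed.

Lemma cnt_stays p k i0 : cntf p i0 * 2 ^ k < 2 ^ i0 ->
  forall i, i0 <= i -> cntf p i * 2 ^ k < 2 ^ i.
Proof.
  intros H. induction 1; auto. pose proof (cnt_mono p m).
  rewrite Nat.pow_succ_r'. nia.
Qed.

Definition xB (p : nat -> nat) (k : nat) : nat :=
  if excluded_middle_informative (exists i, cntf p i * 2 ^ k < 2 ^ i) then 1 else 0.

Lemma qB_npair p i k : qB p (npair i k) = if cntf p i * 2 ^ k <? 2 ^ i then 1 else 0.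
Proof. unfold qB. rewrite unpair_npair. cbn [fst snd]. rewrite le01_spec. reflexivity. Qed.

Lemma qB_rep p : rep Baire_lim (qB p) (xB p).
Proof.
  intros k. unfold xB. destruct (excluded_middle_informative _) as [[i0 H]|H].
  - exists i0. intros i Hi. rewrite qB_npair. apply (cnt_stays p k i0 H) in Hi.
    destruct (Nat.ltb_spec (cntf p i * 2 ^ k) (2 ^ i)); lia.
  - exists 0. intros i _. rewrite qB_npair.
    destruct (Nat.ltb_spec (cntf p i * 2 ^ k) (2 ^ i)); auto. exfalso; eauto.
Qed.

Lemma conv_le a b c : (INR a * (/ 2) ^ b <= (/ 2) ^ c)%R <-> a * 2 ^ c <= 2 ^ b.
Proof.
  rewrite !pow_inv.
  assert (Pb : (0 < 2 ^ b)%R) by (apply pow_lt; lra).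
  assert (Pc : (0 < 2 ^ c)%R) by (apply pow_lt; lra).
  split; intros H.
  - apply INR_le. rewrite mult_INR, !pow_INR, INR2.
    apply (Rmult_le_compat_r (2 ^ b * 2 ^ c)) in H; [|nra].
    replace (INR a * / 2 ^ b * (2 ^ b * 2 ^ c))%R with (INR a * 2 ^ c)%R in H by (field; lra).
    replace (/ 2 ^ c * (2 ^ b * 2 ^ c))%R with (2 ^ b)%R in H by (field; lra). auto.
  - apply le_INR in H. rewrite mult_INR, !pow_INR, INR2 in H.
    apply (Rmult_le_compat_r (/ 2 ^ b * / 2 ^ c)) in H.
    2:{ left. apply Rmult_lt_0_compat; apply Rinv_0_lt_compat; auto. }
    replace (INR a * 2 ^ c * (/ 2 ^ b * / 2 ^ c))%R with (INR a * / 2 ^ b)%R in H by (field; lra).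
    replace (2 ^ b * (/ 2 ^ b * / 2 ^ c))%R with (/ 2 ^ c)%R in H by (field; lra). auto.
Qed.

Lemma sumto_trunc f M n : sumto (fun m => if m <? M then f m else 0) n <= sumto f M.
Proof.
  assert (E : sumto (fun m => if m <? M then f m else 0) n = sumto f (Nat.min n M)).
  { induction n. simpl. auto. cbn [sumto]. rewrite IHn. destruct (Nat.ltb_spec n M).
    - replace (Nat.min (S n) M) with (S (Nat.min n M)) by lia. cbn [sumto].
      replace (Nat.min n M) with n by lia. auto.
    - replace (Nat.min (S n) M) with (Nat.min n M) by lia. lia. }
  rewrite E. clear E.
  assert (forall a b, a <= b -> sumto f a <= sumto f b).
  { intros a b H. induction H; simpl; lia. }
  apply H. lia.
Qed.

Lemma sumto_mono_bound f a b : a <= b -> sumto f a <= sumto f b.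
Proof. induction 1; simpl; lia. Qed.

Lemma even_sum g J : sumto (fun l => ind (Nat.even l) * g (l / 2)) (2 * J) = sumto g J.
Proof.
  induction J. reflexivity.
  replace (2 * S J) with (S (S (2 * J))) by lia. cbn [sumto]. rewrite IHJ.
  rewrite Nat.even_succ, Nat.odd_even, Nat.even_even.
  replace (2 * J / 2) with J by (rewrite Nat.mul_comm, Nat.div_mul; lia). simpl. lia.
Qed.

Lemma cnt_ind p i : cntf p i = sumto (fun j => ind (termf p i j =? 1)) (2 ^ i).
Proof.
  unfold cntf. apply sumto_ext. intros j _. pose proof (termf_le1 p i j).
  destruct (Nat.eqb_spec (termf p i j) 1); simpl; lia.
Qed.

Lemma word_cyl_Xz z i : word (Xz z i - 1) = map z (seq 0 i).
Proof. apply word_vw. fold (Xz z i). pose proof (Xz_range z i).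
  pose proof (Nat.pow_nonzero 2 i). lia. Qed.

Lemma MB p A : rep ClosedCantor p A -> (null_set A <-> forall k, exists i, cntf p i * 2 ^ k < 2 ^ i).
Proof.
  intros HA. split.
  - intros Hnull k. destruct (Hnull (S k)) as [s [Hcov Hsum]].
    set (F := fun l => if Nat.even l then s (l / 2) else word (p (l / 2))).
    destruct (fan F []) as [J HJ].
    { intros z _. destruct (classic (A z)) as [Az|Az].
      - destruct (Hcov z Az) as [i Hi]. exists (2 * i). unfold F.
        rewrite Nat.even_even. rewrite Nat.mul_comm, Nat.div_mul by lia. auto.
      - rewrite (HA z) in Az. apply NNPP in Az. destruct Az as [n Hn].
        exists (S (2 * n)). unfold F. rewrite Nat.even_succ, Nat.odd_even.
        replace (S (2 * n) / 2) with n by (apply Nat.div_unique with 1; lia). auto. }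
    set (i := J + sumto (fun l => length (F l)) (2 * J)).
    assert (HF : forall l, l < 2 * J -> length (F l) <= i).
    { intros l Hl. pose proof (term_le_sumto (fun l => length (F l)) (2 * J) l Hl). unfold i. lia. }
    set (T := sumto (fun j => 2 ^ (i - length (s j))) J).
    assert (Hcnt : cntf p i <= T).
    { rewrite cnt_ind.
      eapply Nat.le_trans.
      - apply (union_bound (fun j => termf p i j =? 1) (fun l => Nat.even l)
                 (fun l j => extb (F l) i j) (2 ^ i) J).
        intros j Hj Hg. apply Nat.eqb_eq in Hg.
        set (z := zf (2 ^ i + j)).
        assert (Ej : Xz z i - 2 ^ i = j) by (apply Xz_zf'; auto).
        destruct (termf_spec p i z) as [[B1 B2]|[B1 B2]]; [|rewrite Ej in B1; lia].
        destruct (HJ z ltac:(intros t Ht; simpl in Ht; lia)) as [l [Hl Hz]].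
        destruct (Nat.even l) eqn:El.
        + exists l. repeat split; auto. apply extb_cyl; auto. apply HF. lia.
        + exfalso. apply B2. exists (l / 2). unfold F in Hz. rewrite El in Hz.
          assert (l / 2 <= l) by (apply Nat.Div0.div_le_upper_bound; lia).
          pose proof (HF l ltac:(lia)). unfold F in H0. rewrite El in H0.
          split. unfold i; lia. split; auto.
      - rewrite (sumto_ext _ (fun l => ind (Nat.even l) * 2 ^ (i - length (s (l / 2))))).
        + eapply Nat.le_trans. apply sumto_mono_bound with (b := 2 * J). lia.
          rewrite (even_sum (fun j => 2 ^ (i - length (s j)))). lia.
        + intros l Hl. destruct (Nat.even l) eqn:El; simpl; [|lia].
          rewrite count_extb. unfold F. rewrite El. reflexivity. apply HF. lia. }
    assert (HT : (INR T * (/ 2) ^ i <= (/ 2) ^ S k)%R).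
    { unfold T. rewrite INR_sumto, <- rs_scal.
      rewrite (rs_ext _ (fun j => ((/ 2) ^ length (s j))%R)).
      - destruct J. simpl rs. left. apply half_pos. rewrite <- sum_rs. apply Hsum.
      - intros j Hj. apply half_pow_conv.
        pose proof (HF (2 * j) ltac:(lia)). unfold F in H.
        rewrite Nat.even_even, Nat.mul_comm, Nat.div_mul in H by lia. auto. }
    apply le_INR in Hcnt.
    assert (Hc : (INR (cntf p i) * (/ 2) ^ i <= (/ 2) ^ S k)%R).
    { eapply Rle_trans; [|apply HT]. apply Rmult_le_compat_r; auto. left; apply half_pos. }
    apply conv_le in Hc. exists i. rewrite Nat.pow_succ_r' in Hc.
    pose proof (Nat.pow_nonzero 2 i). lia.
  - intros H k. destruct (H (S k)) as [i Hi].
    set (s := fun m => if (m <? 2 ^ i) && (termf p i m =? 1) then word (2 ^ i + m - 1)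
                       else repeat false (S (S k + m))).
    exists s. split.
    + intros z Az. exists (Xz z i - 2 ^ i). unfold s.
      pose proof (Xz_range z i). rewrite Nat.pow_succ_r' in H0.
      destruct (termf_spec p i z) as [[B1 B2]|[B1 B2]].
      * rewrite B1. replace ((Xz z i - 2 ^ i) <? 2 ^ i) with true by (symmetry; apply Nat.ltb_lt; lia).
        simpl. replace (2 ^ i + (Xz z i - 2 ^ i) - 1) with (Xz z i - 1) by lia.
        rewrite word_cyl_Xz. apply in_cyl_map. rewrite length_map, length_seq. auto.
      * exfalso. rewrite (HA z) in Az. apply Az. destruct B2 as [n [_ [Hb _]]]. eauto.
    + intros N. 
      set (g := fun m => if m <? 2 ^ i then termf p i m else 0).
      apply Rle_trans with (sum_f_R0 (fun m => (INR (g m) * (/ 2) ^ i + (/ 2) ^ (S (S k + m)))%R) N).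
      * apply sum_Rle. intros m _. unfold s, g.
        pose proof (half_pos i). pose proof (half_pos (S (S k + m))).
        destruct (Nat.ltb_spec m (2 ^ i)); simpl andb.
        -- destruct (Nat.eqb_spec (termf p i m) 1).
           ++ rewrite e. replace (length (word (2 ^ i + m - 1))) with i. change (INR 1) with 1%R. lra.
              symmetry. apply len_from_range. rewrite vw_word.
              rewrite Nat.pow_succ_r'. pose proof (Nat.pow_nonzero 2 i). lia.
           ++ rewrite repeat_length. pose proof (pos_INR (termf p i m)). nra.
        -- cbv iota. rewrite repeat_length. change (INR 0) with 0%R. lra.
      * rewrite sum_plus.
        pose proof (geom (S k) N) as G.
        assert (Hg : (sum_f_R0 (fun m => INR (g m) * (/ 2) ^ i) N <= (/ 2) ^ S k)%R).
        { rewrite sum_rs, rs_scal, <- INR_sumto.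
          eapply Rle_trans with (INR (cntf p i) * (/ 2) ^ i)%R.
          - apply Rmult_le_compat_r. left; apply half_pos. apply le_INR. apply sumto_trunc.
          - apply conv_le. lia. }
        replace ((/ 2) ^ k)%R with ((/ 2) ^ S k + (/ 2) ^ S k)%R by (simpl; lra).
        apply Rplus_le_compat; auto.
Qed.

Lemma xB_zero p k : xB p k = 0 <-> ~ exists i, cntf p i * 2 ^ k < 2 ^ i.
Proof. unfold xB. destruct (excluded_middle_informative _); split; intros; try tauto; lia. Qed.

Theorem lemma7p9 : sW_equiv LPO' NEG.
Proof.
  split.
  - exists (top KH), (top KA). intros G HG p x Hp _.
    set (q := qA p). set (A := Aq q).
    assert (HrA : rep ClosedCantor q A) by (intros z; reflexivity).
    assert (Hd : exists y, NEG A y).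
    { destruct (classic (null_set A)); [exists true | exists false]; unfold NEG; split; intros; auto; try discriminate; tauto. }
    destruct (HG q A HrA Hd) as [y [Hy HN]].
    exists q, (fun _ => G q 0), y. split; [apply KA_computes|]. split; [apply KH_computes|].
    split; [exact Hy|].
    pose proof (MA p x Hp) as HM. unfold NEG in HN. unfold LPO'.
    fold q in HM. fold A in HM.
    destruct y; split; intros H; auto; try discriminate.
    + exfalso. apply (proj1 HM (proj1 HN eq_refl)). auto.
    + apply NNPP. intros C. assert (false = true) by (apply HN, HM; auto). discriminate.
  - exists (top KH), (top KB). intros G HG p A HA _.
    set (q := qB p). set (x := xB p).
    assert (Hr : rep Baire_lim q x) by apply qB_rep.
    assert (Hd : exists y, LPO' x y).
    { destruct (classic (exists n, x n = 0)); [exists false | exists true]; unfold LPO'; split; intros; auto; try discriminate; tauto. }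
    destruct (HG q x Hr Hd) as [y [Hy HL]].
    exists q, (fun _ => G q 0), y. split; [apply KB_computes|]. split; [apply KH_computes|].
    split; [exact Hy|].
    pose proof (MB p A HA) as HM. unfold LPO' in HL. unfold NEG.
    assert (E : null_set A <-> ~ exists k, x k = 0).
    { rewrite HM. split.
      - intros H [k Hk]. apply xB_zero in Hk. apply Hk. apply H.
      - intros H k. apply NNPP. intros C. apply H. exists k. apply xB_zero. auto. }
    rewrite E. destruct y; split; intros H; auto.
    + intros C. assert (true = false) by (apply HL; auto). discriminate.
    + discriminate.
    + exfalso. apply H. apply HL. auto.
Qed.
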